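(* Set $L = (n-1)(r-1) +1$. Then the following equality holds in $E_n(L)$: \begin{equation*} \sum_{k = 0}^L(-1)^k\begin{bmatrix} L \\ k \end{bmatrix}(k, 0, \dots, 0, L - k) = 0. \end{equation*}
   Context: Let $q$ be an indeterminate, $[n] = \frac{q^n - q^{-n}}{q - q^{-1}}$ for $n \in \mathbb{Z}$, $[m]^! = [1]\cdots[m]$, and for $n \in \mathbb{Z}$, $m \in \mathbb{N}$, $\begin{bmatrix} n \\ m\end{bmatrix} = \frac{[n][n-1]\cdots[n-m+1]}{[m]^!}$ for $m \ge 1$, $\begin{bmatrix} n \\ 0\end{bmatrix} = 1$. Fix an integer $r \ge 2$ and $n \ge 2$. Let $V_n$ be the vector space over $\mathbb{Q}(q)$ spanned by symbols $a = (a_1, \dots, a_n) \in \mathbb{N}^n$ subject to the relations: for $1 \le i \le n-1$, if $a_i \ge r$ then $\sum_{0 \le j \le r}(-1)^j\begin{bmatrix} r \\ j\end{bmatrix} a(j) = 0$, where $a(j) = (a_1, \dots, a_{i-1}, a_i - j, a_{i+1} + j, a_{i+2}, \dots, a_n)$. For $m \ge 1$, $E_n(m)$ denotes the subspace of $V_n$ spanned by $\{ a = (a_1, \dots, a_n) \mid \sum_i a_i = m,\ a_i \in [0, r-1] \text{ for } 1 \le i < n\}$; every $a \in V_n$ with $\sum a_i = m$ lies in $E_n(m)$. *)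

(* Defs.v *)
From HB Require Import structures.
From mathcomp Require Import all_boot all_order all_algebra fraction.
Set Implicit Arguments. Unset Strict Implicit. Unset Printing Implicit Defensive.
Import Order.TTheory GRing.Theory Num.Theory.
Local Open Scope ring_scope.

Definition Qq : fieldType := {fraction {poly rat}}.
Definition qv : Qq := FracField.tofrac 'X.

Definition qint (n : int) : Qq := (qv ^ n - qv ^ (- n)) / (qv - qv^-1).

Definition qfact (m : nat) : Qq := \prod_(j < m) qint (j.+1)%:Z.

Definition qbinom (n : int) (m : nat) : Qq :=
  if m == 0%N then 1 else (\prod_(j < m) qint (n - j%:Z)) / qfact m.

(* symbols a = (a_1,...,a_n) in N^n, indexed from 0 *)
Definition pt (n : nat) := {ffun 'I_n -> nat}.

(* formal linear combinations of symbols (elements of the free Q(q)-space on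
   N^n), represented by their coefficient functions *)
Definition fcomb (n : nat) := pt n -> Qq.

Definition sym n (a : pt n) : fcomb n := fun b => (b == a)%:R.

(* a(j) for position i (0-based; the paper's i+1), i.e. a_i - j at i,
   a_{i+1} + j at i+1 *)
Definition shift n (a : pt n) (i : 'I_n) (j : nat) : pt n :=
  [ffun k : 'I_n => if k == i then (a k - j)%N
                    else if val k == (val i).+1 then (a k + j)%N else a k].

Definition relvec n (r : nat) (a : pt n) (i : 'I_n) : fcomb n :=
  fun b => \sum_(j < r.+1) (-1) ^+ j * qbinom r%:Z j * sym (shift a i j) b.

(* admissible relation: 1 <= i <= n-1 (paper indexing), a_i >= r *)
Definition admissible n (r : nat) (a : pt n) (i : 'I_n) : bool :=
  ((val i).+1 < n)%N && (r <= a i)%N.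

(* f is zero in V_n: f lies in the span of the defining relations *)
Definition zero_in_V n (r : nat) (f : fcomb n) : Prop :=
  exists s : seq (Qq * (pt n * 'I_n)),
    all (fun t => admissible r t.2.1 t.2.2) s /\
    forall b, f b = \sum_(t <- s) t.1 * relvec r t.2.1 t.2.2 b.

Definition endpt n (k m : nat) : pt n :=
  [ffun t : 'I_n => if val t == 0%N then k
                    else if val t == n.-1 then m else 0%N].

(* Main.v *)
Require Import Defs.
From HB Require Import structures.
From mathcomp Require Import all_boot all_order all_algebra fraction.
From mathcomp Require Import ring zify.
From mathcomp.multinomials Require Import mpoly.
Import Order.TTheory GRing.Theory Num.Theory.
Local Open Scope ring_scope.
Set Implicit Arguments. Unset Strict Implicit.

Lemma qv_neq0 : qv != 0.
Proof. by rewrite /qv tofrac_eq0 polyX_eq0. Qed.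

Lemma qvX_neq1 (k : nat) : (0 < k)%N -> qv ^+ k != 1.
Proof.
move=> hk; rewrite /qv -tofracXn -tofrac1 tofrac_eq.
apply/eqP=> h; move: (congr1 (fun p : {poly rat} => size p) h); rewrite size_polyXn size_poly1; lia.
Qed.

Opaque qv.

Definition dq : Qq := qv - qv^-1.

Lemma dq_neq0 : dq != 0.
Proof.
rewrite /dq subr_eq0.
apply: contraNN (@qvX_neq1 2 isT) => /eqP h.
rewrite expr2.
rewrite [X in X * _]h.
rewrite mulVf; last exact: qv_neq0.
exact: eqxx.
Qed.

Lemma qvz_neq0 (e : int) : qv ^ e != 0.
Proof. by rewrite expfz_eq0 negb_and qv_neq0 orbT. Qed.

Lemma qint_neq0 (k : nat) : (0 < k)%N -> qint k%:Z != 0.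
move=> hk; rewrite /qint.
apply: mulf_neq0; last by rewrite invr_neq0 // dq_neq0.
rewrite subr_eq0 -exprnP -exprnN.
have hk2 : (0 < k + k)%N by lia.
apply/eqP => h; move/eqP: (@qvX_neq1 _ hk2); apply.
have hX : qv ^+ k != 0 by rewrite expf_neq0 //; exact: qv_neq0.
rewrite exprD [X in X * _]h mulVf //.
Qed.

Lemma qintE (e : int) : qint e = (qv ^ e - (qv ^ e)^-1) / dq.
Proof. by rewrite /qint invr_expz. Qed.

Lemma qintD_aux (F : fieldType) (x y d : F) : d != 0 -> y != 0 -> x != 0 ->
 (x * y - (x * y)^-1) / d = x^-1 * ((y - y^-1) / d) + y * ((x - x^-1) / d).
Proof. by move=> hd hy hx; field; rewrite hd hx hy. Qed.

Lemma qintD (a b : int) : qint (a + b) = (qv ^ a)^-1 * qint b + qv ^ b * qint a.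
Proof.
rewrite !qintE (expfzDr _ _ qv_neq0).
exact: (qintD_aux dq_neq0 (qvz_neq0 b) (qvz_neq0 a)).
Qed.

Lemma qint0 : qint 0 = 0.
Proof. by rewrite /qint oppr0 subrr mul0r. Qed.

Lemma qfact_neq0 j : qfact j != 0.
Proof. by apply/prodf_neq0 => i _; apply: qint_neq0. Qed.

Lemma qbinomE (m : int) j :
  qbinom m j = (\prod_(i < j) qint (m - i%:Z)) / qfact j.
Proof.
rewrite /qbinom; case: eqP => // ->.
by rewrite /qfact !big_ord0 invr1 mulr1.
Qed.

Lemma qbinom0 m : qbinom m 0 = 1.
Proof. by []. Qed.

Lemma qbinom_over (m : nat) : qbinom m%:Z m.+1 = 0.
Proof.
rewrite qbinomE big_ord_recr /= subrr qint0 mulr0 mul0r //.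
Qed.

Lemma pascal_aux (K : fieldType) (x b y c F f : K) : c != 0 -> f != 0 ->
  (x * b + y * c) * F / (f * c) = x * (F * b / (f * c)) + y * (F / f).
Proof. by move=> hc hf; field; rewrite hc hf. Qed.

Lemma qbinom_pascal (m j : nat) :
  qbinom (m.+1)%:Z j.+1 =
    qv ^ (- (j.+1)%:Z) * qbinom m%:Z j.+1 + qv ^ (m%:Z - j%:Z) * qbinom m%:Z j.
Proof.
rewrite !qbinomE big_ord_recl big_ord_recr /=.
rewrite /qfact big_ord_recr /= -/(qfact j).
have -> : \big[*%R/1]_(i < j) qint ((m.+1)%:Z - (bump 0 i)%:Z)
    = \big[*%R/1]_(i < j) qint (m%:Z - i%:Z).
  by apply: eq_bigr => i _; congr qint; rewrite /bump /=; lia.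
have -> : (m.+1)%:Z - 0%:Z = (j.+1)%:Z + (m%:Z - j%:Z) by lia.
rewrite qintD -invr_expz.
rewrite pascal_aux //; [exact: qint_neq0 | exact: qfact_neq0].
Qed.

Definition Qe (R : comRingType) (f : {rmorphism Qq -> R}) (e : int) : R := f (qv ^ e).

Definition Sb (R : comRingType) (f : {rmorphism Qq -> R}) (m : nat) (x y : R) : R :=
  \sum_(j < m.+1) f ((-1) ^+ j * qbinom m%:Z j) * (x ^+ (m - j) * y ^+ j).

Definition Pp (R : comRingType) (f : {rmorphism Qq -> R}) (m : nat) (x y : R) : R :=
  \prod_(s < m) (x - Qe f (2 * s%:Z + 1 - m%:Z) * y).

Definition gp (R : comRingType) (f : {rmorphism Qq -> R}) (m : nat) (x c : R) : R :=
  \prod_(s < m) (x - Qe f (2 * s%:Z) * c).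

Lemma QeD (R : comRingType) (f : {rmorphism Qq -> R}) a b :
  Qe f (a + b) = Qe f a * Qe f b.
Proof. by rewrite /Qe (expfzDr _ _ qv_neq0) rmorphM. Qed.

Lemma Qe0 (R : comRingType) (f : {rmorphism Qq -> R}) : Qe f 0 = 1.
Proof. by rewrite /Qe expr0z rmorph1. Qed.

Lemma QeN1X (R : comRingType) (f : {rmorphism Qq -> R}) (j : nat) :
  Qe f (-1) ^+ j = Qe f (- j%:Z).
Proof.
elim: j => [|j IH]; first by rewrite expr0 Qe0.
by rewrite exprS IH -QeD; congr (Qe f _); lia.
Qed.

Lemma QB (R : comRingType) (f : {rmorphism Qq -> R}) (m : nat) (x y : R) :
  Sb f m x y = Pp f m x y.
Proof.
elim: m x y => [|m IH] x y.
  rewrite /Sb /Pp big_ord1 big_ord0 /= qbinom0 !expr0 !mulr1 rmorph1.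
  by [].
have -> : Pp f m.+1 x y = Pp f m x (Qe f (-1) * y) * (x - Qe f m%:Z * y).
  rewrite /Pp big_ord_recr /=; congr (_ * (x - Qe f _ * y)); last by lia.
  apply: eq_bigr => s _; rewrite mulrA -QeD; congr (x - Qe f _ * y); lia.
rewrite -IH /Sb mulr_suml.
pose A j := f ((-1) ^+ j * qbinom m%:Z j).
pose U j := A j * Qe f (- j%:Z) * (x ^+ (m - j).+1 * y ^+ j).
pose V j := A j * Qe f (m%:Z - j%:Z) * (x ^+ (m - j) * y ^+ j.+1).
pose W j := f ((-1) ^+ j.+1 * qbinom m%:Z j.+1) * Qe f (- (j.+1)%:Z)
              * (x ^+ (m - j) * y ^+ j.+1).
have HR : forall j : 'I_m.+1,
    f ((-1) ^+ j * qbinom m%:Z j) * (x ^+ (m - j) * (Qe f (-1) * y) ^+ j)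
      * (x - Qe f m%:Z * y) = U j - V j.
  move=> j; rewrite /U /V /A exprMn QeN1X.
  have -> : Qe f (m%:Z - j%:Z) = Qe f (- j%:Z) * Qe f m%:Z.
    by rewrite -QeD; congr (Qe f _); lia.
  rewrite !exprS; ring.
rewrite (eq_bigr _ (fun j _ => HR j)) sumrB.
have HL : forall j : 'I_m.+1,
    f ((-1) ^+ (j.+1) * qbinom (m.+1)%:Z j.+1) * (x ^+ (m.+1 - j.+1) * y ^+ j.+1)
      = W j - V j.
  move=> j; rewrite /W /V /A qbinom_pascal subSS /Qe.
  rewrite !rmorphM rmorphD !rmorphM !rmorphXn rmorphN rmorph1 exprS; ring.
rewrite big_ord_recl /= (eq_bigr _ (fun j _ => HL (j : 'I_m.+1))) sumrB addrA.
congr (_ - _).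
rewrite big_ord_recr /= /W qbinom_over mulr0 rmorph0 !mul0r addr0.
rewrite [in RHS]big_ord_recl /=; congr (_ + _).
  by rewrite /U /A qbinom0 !expr0 Qe0 !subn0 !mulr1 !rmorph1 ?mul1r.
apply: eq_big => // j _; rewrite /U /W /A /bump /=.
have -> : (m - j.+1).+1 = (m - j)%N by have := ltn_ord j; lia.
by [].
Qed.

Lemma Pp_g (R : comRingType) (f : {rmorphism Qq -> R}) m x y :
  Pp f m x y = gp f m x (Qe f (1 - m%:Z) * y).
Proof.
rewrite /Pp /gp; apply: eq_bigr => s _; rewrite mulrA -QeD.
congr (x - Qe f _ * y); lia.
Qed.

Lemma gp_S (R : comRingType) (f : {rmorphism Qq -> R}) m x c :
  gp f m.+1 x c = gp f m x c * (x - Qe f (2 * m%:Z) * c).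
Proof. by rewrite /gp big_ord_recr. Qed.

Lemma gp_mul (R : comRingType) (f : {rmorphism Qq -> R}) a k x c :
  exists t, gp f (a + k) x c = gp f a x c * t.
Proof.
elim: k => [|k [t IH]]; first by exists 1; rewrite addn0 mulr1.
exists (t * (x - Qe f (2 * (a + k)%:Z) * c)).
by rewrite addnS gp_S IH mulrA.
Qed.

Lemma gp_mul' (R : comRingType) (f : {rmorphism Qq -> R}) a b x c :
  (a <= b)%N -> exists t, gp f b x c = gp f a x c * t.
Proof. by move=> hab; rewrite -(subnKC hab); apply: gp_mul. Qed.

Lemma gp_hom (R : comRingType) (f : {rmorphism Qq -> R}) m d x c :
  gp f m (d * x) (d * c) = d ^+ m * gp f m x c.
Proof.
have -> : d ^+ m = \prod_(s < m) d by rewrite prodr_const card_ord.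
rewrite /gp -big_split /=.
by apply: eq_bigr => s _; ring.
Qed.

Lemma Pp_rev (R : comRingType) (f : {rmorphism Qq -> R}) m x y :
  exists t, Pp f m y x = t * Pp f m x y.
Proof.
exists (\prod_(s < m) (- Qe f (- (2 * s%:Z + 1 - m%:Z)))).
rewrite /Pp -big_split /= (reindex_inj rev_ord_inj) /=.
apply: eq_bigr => s _.
have -> : 2 * (rev_ord s)%:Z + 1 - m%:Z = - (2 * s%:Z + 1 - m%:Z).
  rewrite /=; have := ltn_ord s; lia.
have h : Qe f (- (2 * s%:Z + 1 - m%:Z)) * Qe f (2 * s%:Z + 1 - m%:Z) = 1.
  by rewrite -QeD addNr Qe0.
move: h; move: (Qe f (- (2 * s%:Z + 1 - m%:Z))) (Qe f (2 * s%:Z + 1 - m%:Z)).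
move=> u v h.
have -> : y - u * x = - u * (x - v * y) + (1 - u * v) * y by ring.
by rewrite h subrr mul0r addr0.
Qed.

Definition is_ideal (R : comRingType) (J : R -> Prop) :=
  [/\ J 0, forall a b, J a -> J b -> J (a + b) & forall t a, J a -> J (t * a)].

Lemma Kstep (R : comRingType) (f : {rmorphism Qq -> R}) N x b c :
  forall J : R -> Prop, is_ideal J ->
  (forall a, (a <= N)%N -> J (gp f a x b * gp f (N - a) b c)) -> J (gp f N x c).
Proof.
elim: N => [|N IH] J [J0 JD JM] H.
  by have := H 0%N (leqnn 0); rewrite /gp !big_ord0 mulr1.
pose J' := fun z => J (z * (x - Qe f (2 * N%:Z) * c)).
have hJ' : is_ideal J'.
  split; rewrite /J'.
  - by rewrite mul0r.
  - by move=> u v hu hv; rewrite mulrDl; apply: JD.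
  - by move=> t u hu; rewrite -mulrA; apply: JM.
rewrite gp_S; apply: (IH J' hJ') => a ha; rewrite /J'.
have -> : gp f a x b * gp f (N - a) b c * (x - Qe f (2 * N%:Z) * c) =
    gp f a.+1 x b * gp f (N.+1 - a.+1) b c
    + Qe f (2 * a%:Z) * (gp f a x b * gp f (N.+1 - a) b c).
  rewrite subSS subSn // !gp_S.
  have -> : Qe f (2 * N%:Z) = Qe f (2 * a%:Z) * Qe f (2 * (N - a)%:Z).
    by rewrite -QeD; congr (Qe f _); lia.
  ring.
apply: JD; first by apply: H.
by apply: JM; apply: H; apply: leqW.
Qed.

Lemma chain (R : comRingType) (f : {rmorphism Qq -> R}) (J : R -> Prop)
    (X : nat -> R) (r n : nat) :
  is_ideal J -> (2 <= r)%N ->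
  (forall i, (i.+1 < n)%N -> J (Pp f r (X i) (X i.+1))) ->
  forall k, (k < n)%N ->
  J (gp f (k * (r - 1) + 1) (X k) (Qe f (- (k%:Z * (r%:Z - 1))) * X 0%N)).
Proof.
move=> hJ hr HG; have [J0 JD JM] := hJ.
elim => [|k IH] hk.
  rewrite mul0n add0n /gp big_ord1 /=.
  have -> : Qe f (2 * 0%:Z) = 1 by rewrite mulr0 Qe0.
  have -> : Qe f (- (0%:Z * (r%:Z - 1))) = 1 by rewrite mul0r oppr0 Qe0.
  by rewrite !mul1r subrr.
have hk' : (k < n)%N by lia.
set N := (k.+1 * (r - 1) + 1)%N.
set b := Qe f (- (r%:Z - 1)) * X k.
apply: (@Kstep R f N (X k.+1) b _ J hJ) => a ha.
have [hra | hra] := leqP r a.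
  have [t ht] := gp_mul' f (X k.+1) b hra.
  rewrite ht.
  have -> : gp f r (X k.+1) b = Pp f r (X k.+1) (X k).
    by rewrite Pp_g /b; congr (gp f r _ (Qe f _ * _)); lia.
  have [t' ht'] := Pp_rev f r (X k) (X k.+1).
  rewrite ht'.
  set G2 := gp f (N - a) _ _.
  have -> : t' * Pp f r (X k) (X k.+1) * t * G2 = (t' * t * G2) * Pp f r (X k) (X k.+1) by ring.
  by apply: JM; apply: HG.
have hLa : (k * (r - 1) + 1 <= N - a)%N by rewrite /N; lia.
have [t ht] := gp_mul' f b (Qe f (- (k.+1%:Z * (r%:Z - 1))) * X 0%N) hLa.
rewrite ht.
have -> : Qe f (- (k.+1%:Z * (r%:Z - 1))) * X 0%N
    = Qe f (- (r%:Z - 1)) * (Qe f (- (k%:Z * (r%:Z - 1))) * X 0%N).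
  by rewrite mulrA -QeD; congr (Qe f _ * _); lia.
rewrite /b gp_hom.
set G := gp f _ (X k) _.
have -> : forall u v w : R, u * (v * G * w) = (u * v * w) * G by move=> *; ring.
by apply: JM; apply: IH.
Qed.

Definition tomnm (n : nat) (b : pt n) : 'X_{1..n} := [multinom b i | i < n].

Lemma tomnmE n (b : pt n) k : tomnm b k = b k.
Proof. by rewrite /tomnm mnmE. Qed.

Lemma tomnm_inj n : injective (@tomnm n).
Proof.
move=> b1 b2 h; apply/ffunP => k.
by rewrite -!tomnmE h.
Qed.

Definition Phi n (p : {mpoly Qq[n]}) : fcomb n := fun b => p@_(tomnm b).

Definition addpt n (a : pt n) (m : 'X_{1..n}) : pt n := [ffun k => (a k + m k)%N].
Definition subpt n (b : pt n) (m : 'X_{1..n}) : pt n := [ffun k => (b k - m k)%N].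

Lemma Phi_X n (m : 'X_{1..n}) p b :
  Phi ('X_[m] * p) b = if (m <= tomnm b)%MM then Phi p (subpt b m) else 0.
Proof.
rewrite /Phi; case: ifP => hm.
  have -> : tomnm b = (m + tomnm (subpt b m))%MM.
    apply/mnmP => k; rewrite mnmDE !tomnmE ffunE.
    by have := mnm_lepP hm k; rewrite tomnmE => hk; rewrite subnKC.
  by rewrite mulrC mcoeffMX.
apply/eqP; rewrite mcoeff_eq0 mulrC (perm_mem (msuppMX p m)).
apply/negP => /mapP [m' _ hb]; move/negP: hm; apply.
by rewrite hb; apply/mnm_lepP => k; rewrite mnmDE leq_addr.
Qed.

Lemma shift_add n (a : pt n) (m : 'X_{1..n}) i j :
  (j <= a i)%N -> shift (addpt a m) i j = addpt (shift a i j) m.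
Proof.
move=> hj; apply/ffunP => k; rewrite !ffunE.
case: eqP => [->|_]; first by lia.
by case: eqP => _; lia.
Qed.

Lemma sym_add n (s b : pt n) (m : 'X_{1..n}) :
  sym (addpt s m) b = if (m <= tomnm b)%MM then sym s (subpt b m) else 0.
Proof.
rewrite /sym; case: ifP => hm.
  suff -> : (b == addpt s m) = (subpt b m == s) by [].
  apply/idP/idP => /eqP h; apply/eqP.
    by rewrite h; apply/ffunP => k; rewrite !ffunE addnK.
  rewrite -h; apply/ffunP => k; rewrite !ffunE.
  by have := mnm_lepP hm k; rewrite tomnmE => hk; rewrite subnK.
case: eqP => // hb; suff : (m <= tomnm b)%MM by rewrite hm.
by rewrite hb; apply/mnm_lepP => k; rewrite tomnmE ffunE leq_addl.
Qed.

Lemma relvec_add n r (a : pt n) (m : 'X_{1..n}) i b :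
  (r <= a i)%N ->
  relvec r (addpt a m) i b =
    if (m <= tomnm b)%MM then relvec r a i (subpt b m) else 0.
Proof.
move=> hr; rewrite /relvec.
have H : forall j : 'I_r.+1,
    (-1) ^+ j * qbinom r%:Z j * sym (shift (addpt a m) i j) b =
    if (m <= tomnm b)%MM
    then (-1) ^+ j * qbinom r%:Z j * sym (shift a i j) (subpt b m) else 0.
  move=> j; rewrite shift_add; last by have := ltn_ord j; lia.
  by rewrite sym_add; case: ifP => _; rewrite ?mulr0.
rewrite (eq_bigr _ (fun j _ => H j)); case: ifP => _ //.
by rewrite big1.
Qed.

Definition Jr n r (p : {mpoly Qq[n]}) : Prop := zero_in_V r (Phi p).

Lemma zero_in_V_ext n r (g h : fcomb n) :
  (forall b, g b = h b) -> zero_in_V r g -> zero_in_V r h.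
Proof. by move=> e [s [hs hg]]; exists s; split=> // b; rewrite -e. Qed.

Lemma Jr0 n r : Jr r (0 : {mpoly Qq[n]}).
Proof. by exists [::]; split=> // b; rewrite /Phi mcoeff0 big_nil. Qed.

Lemma JrD n r (p q : {mpoly Qq[n]}) : Jr r p -> Jr r q -> Jr r (p + q).
Proof.
move=> [s1 [h1 e1]] [s2 [h2 e2]]; exists (s1 ++ s2); split.
  by rewrite all_cat h1 h2.
by move=> b; rewrite big_cat /= -e1 -e2 /Phi mcoeffD.
Qed.

Lemma JrZ n r c (p : {mpoly Qq[n]}) : Jr r p -> Jr r (c *: p).
Proof.
move=> [s [h e]]; exists [seq (c * t.1, t.2) | t <- s]; split.
  by rewrite all_map; apply: sub_all h => t.
move=> b; rewrite big_map /Phi mcoeffZ -/(Phi p b) e mulr_sumr.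
by apply: eq_bigr => t _; rewrite mulrA.
Qed.

Lemma JrX n r (m : 'X_{1..n}) (p : {mpoly Qq[n]}) : Jr r p -> Jr r ('X_[m] * p).
Proof.
move=> [s [h e]]; exists [seq (t.1, (addpt t.2.1 m, t.2.2)) | t <- s]; split.
  rewrite all_map; apply: sub_all h => t /= /andP [h1 h2].
  by rewrite /admissible h1 /= ffunE (leq_trans h2) // leq_addr.
move=> b; rewrite big_map Phi_X /=.
have H : forall t, t \in s ->
    t.1 * relvec r (addpt t.2.1 m) t.2.2 b =
    if (m <= tomnm b)%MM then t.1 * relvec r t.2.1 t.2.2 (subpt b m) else 0.
  move=> t ts; have /andP [_ hr] := allP h t ts.
  by rewrite relvec_add //; case: ifP => _; rewrite ?mulr0.
rewrite (eq_big_seq _ H); case: ifP => _; first by rewrite e.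
by rewrite big1.
Qed.

Lemma Jr_sum n r (I : Type) (l : seq I) (F : I -> {mpoly Qq[n]}) :
  (forall i, Jr r (F i)) -> Jr r (\sum_(i <- l) F i).
Proof.
move=> hF; elim: l => [|x l IH]; first by rewrite big_nil; apply: Jr0.
by rewrite big_cons; apply: JrD.
Qed.

Lemma Jr_ideal n r : is_ideal (@Jr n r).
Proof.
split; [exact: Jr0 | exact: JrD |].
move=> t a ha; rewrite (mpolyE t) mulr_suml; apply: Jr_sum => m.
by rewrite -scalerAl; apply: JrZ; apply: JrX.
Qed.

Lemma Sb_coef n (i0 i1 : 'I_n) (m : nat) b :
  Phi (Sb (in_alg {mpoly Qq[n]}) m 'X_i0 'X_i1) b =
  \sum_(j < m.+1) (-1) ^+ j * qbinom m%:Z j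
     * ((U_(i0) *+ (m - j) + U_(i1) *+ j)%MM == tomnm b)%:R.
Proof.
rewrite /Phi /Sb raddf_sum /=; apply: eq_bigr => j _.
by rewrite mulr_algl mcoeffZ !mpolyXn -mpolyXD mcoeffX.
Qed.

Lemma gen_in n r i : (i.+1 < n.+1)%N ->
  Jr r (Pp (in_alg {mpoly Qq[n.+1]}) r 'X_(inord i) 'X_(inord i.+1)).
Proof.
move=> hi; rewrite -QB.
have vi0 : nat_of_ord (inord i : 'I_n.+1) = i by rewrite inordK //; lia.
have vi1 : nat_of_ord (inord i.+1 : 'I_n.+1) = i.+1 by rewrite inordK.
set i0 : 'I_n.+1 := inord i in vi0 *; set i1 : 'I_n.+1 := inord i.+1 in vi1 *.
set a0 : pt n.+1 := [ffun k => if k == i0 then r else 0%N].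
exists [:: (1, (a0, i0))]; split.
  have wi0 : \val i0 = i := vi0.
  by rewrite /= andbT /admissible wi0 hi /a0 ffunE eqxx leqnn.
move=> b; rewrite Sb_coef big_seq1 /= mul1r /relvec.
apply: eq_bigr => j _; rewrite /sym; congr (_ * _%:R).
have wi0 : \val i0 = i := vi0.
have wi1 : \val i1 = i.+1 := vi1.
have E0 : forall k : 'I_n.+1, (i0 == k) = (i == k :> nat) by move=> k; rewrite -val_eqE wi0.
have E0' : forall k : 'I_n.+1, (k == i0) = (k == i :> nat) by move=> k; rewrite -val_eqE wi0.
have E1 : forall k : 'I_n.+1, (i1 == k) = (i.+1 == k :> nat) by move=> k; rewrite -val_eqE wi1.
have -> : (U_(i0) *+ (r - j) + U_(i1) *+ j)%MM = tomnm (shift a0 i0 j).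
  apply/mnmP => k; rewrite mnmDE !mulmnE !mnm1E tomnmE !ffunE !E0 !E0' !E1 wi0 /=.
  rewrite (eq_sym i) (eq_sym i.+1).
  by case: (@eqP nat k i) => h; case: (@eqP nat k i.+1) => h'; lia.
by rewrite (inj_eq (@tomnm_inj _)) eq_sym.
Qed.

Lemma target_coef n (L : nat) b : (0 < n)%N ->
  Phi (Sb (in_alg {mpoly Qq[n.+1]}) L 'X_(inord n) 'X_(inord 0)) b =
  \sum_(k < L.+1) (-1) ^+ k * qbinom L%:Z k * sym (endpt n.+1 k (L - k)) b.
Proof.
move=> hn; rewrite Sb_coef; apply: eq_bigr => k _; rewrite /sym.
congr (_ * _%:R).
have wi0 : \val (inord 0 : 'I_n.+1) = 0%N by rewrite /= inordK.
have win : \val (inord n : 'I_n.+1) = n by rewrite /= inordK.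
set i0 : 'I_n.+1 := inord 0 in wi0 *; set i1 : 'I_n.+1 := inord n in win *.
have E0 : forall t : 'I_n.+1, (i0 == t) = (0 == t :> nat) by move=> t; rewrite -val_eqE wi0.
have E1 : forall t : 'I_n.+1, (i1 == t) = (n == t :> nat) by move=> t; rewrite -val_eqE win.
have -> : (U_(i1) *+ (L - k) + U_(i0) *+ k)%MM = tomnm (endpt n.+1 k (L - k)).
  apply/mnmP => t; rewrite mnmDE !mulmnE !mnm1E tomnmE !ffunE !E0 !E1 /=.
  rewrite (eq_sym 0%N) (eq_sym n).
  by case: (@eqP nat t 0%N) => h; case: (@eqP nat t n) => h'; lia.
by rewrite (inj_eq (@tomnm_inj _)) eq_sym.
Qed.

Unset Implicit Arguments.

Theorem proposition5p11 (r n : nat) (hr : (2 <= r)%N) (hn : (2 <= n)%N) :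
  let L := ((n - 1) * (r - 1) + 1)%N in
  zero_in_V r
    (fun b : pt n => \sum_(k < L.+1)
        (-1) ^+ k * qbinom L%:Z k * sym (endpt n k (L - k)) b).
Proof.
case: n hn => [|n'] hn; first by [].
move=> L.
pose f := in_alg {mpoly Qq[n'.+1]}.
pose X k : {mpoly Qq[n'.+1]} := 'X_(inord k).
have HG : forall i, (i.+1 < n'.+1)%N -> Jr r (Pp f r (X i) (X i.+1)).
  by move=> i hi; apply: gen_in.
have := @chain _ f _ X r n'.+1 (Jr_ideal n'.+1 r) hr HG n' (ltnSn n').
have E : L = (n' * (r - 1) + 1)%N by rewrite /L subSS subn0.
have Ez : - (n'%:Z * (r%:Z - 1)) = 1 - L%:Z.
  rewrite E; clearbody L; lia.
have -> : gp f (n' * (r - 1) + 1) (X n') (Qe f (- (n'%:Z * (r%:Z - 1))) * X 0%N)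
    = Pp f L (X n') (X 0%N).
  by rewrite Pp_g -E Ez.
rewrite -QB => H; apply: zero_in_V_ext H => b.
have hn' : (0 < n')%N by lia.
exact: (target_coef L b hn').
Qed.
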